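(* Let $C$ be a finite elementary abelian $p$-group ($p$ prime) and $k$ a positive integer; let $d=\log_p|C|$. Then there exists $t\ge k$ such that the direct product $P=\prod_{i=1}^tC_i$ of copies $C_i$ of $C$ contains a subgroup $R$, invariant under the diagonal action on $P$ of the endomorphism algebra $\mathrm{End}\,C\cong M_d(\mathbb{Z}/p\mathbb{Z})$, with the following properties: a) $R$ is contained in the union of the kernels $K_j$ of the natural projections $P\to C_j$, $j=1,\dots,t$; b) $R\cdot\prod_{j\notin J}C_j=P$ for every subset $J\subseteq\{1,\dots,t\}$ of cardinality $k$; b') moreover, every such $J$ is contained in a set $J'\supseteq J$ such that $P=R\times\prod_{j\notin J'}C_j$, and there exist integers $n_{ij}$ such that the projection $\pi:P\to\prod_{j\notin J'}C_j$ with kernel $R$ acts by $C_i\ni c_i\mapsto\prod_{j\notin J'}c_j^{n_{ij}}$, where $c_j\in C_j$ is the element corresponding to $c_i$ under the isomorphisms $C_i\cong C\cong C_j$. *)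

(* Defs.v *)
From HB Require Import structures.
From mathcomp Require Import all_boot all_order all_algebra all_fingroup all_solvable.
Set Implicit Arguments. Unset Strict Implicit. Unset Printing Implicit Defensive.

(* Direct power P = C_1 x ... x C_t of a finite group C (a subgroup of gT),
   realised as the set of functions 'I_t -> gT with values in C,
   with pointwise group operations. *)
Section DirectPower.
Variables (gT : finGroupType) (C : {set gT}) (t : nat).
Local Open Scope group_scope.

Definition dpow : {set {ffun 'I_t -> gT}} := [set f : {ffun 'I_t -> gT} | [forall j, f j \in C]].
Definition pw_mul (f g : {ffun 'I_t -> gT}) : {ffun 'I_t -> gT} := [ffun j => f j * g j].
Definition pw_inv (f : {ffun 'I_t -> gT}) : {ffun 'I_t -> gT} := [ffun j => (f j)^-1].
Definition pw_one : {ffun 'I_t -> gT} := [ffun => 1].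

Definition delta (i : 'I_t) (c : gT) : {ffun 'I_t -> gT} :=
  [ffun j => if j == i then c else 1].

Definition Kproj (j : 'I_t) : {set {ffun 'I_t -> gT}} := [set f in dpow | f j == 1].

Definition prod_out (J : {set 'I_t}) : {set {ffun 'I_t -> gT}} :=
  [set f in dpow | [forall j in J, f j == 1]].

Definition is_subgroup_dpow (R : {set {ffun 'I_t -> gT}}) : Prop :=
  [/\ R \subset dpow, pw_one \in R,
      {in R &, forall f g, pw_mul f g \in R} & {in R, forall f, pw_inv f \in R}].

Definition End_invariant (R : {set {ffun 'I_t -> gT}}) : Prop :=
  forall phi : gT -> gT,
    {in C &, {morph phi : x y / x * y}} -> {in C, forall x, phi x \in C} ->
    forall f : {ffun 'I_t -> gT}, f \in R -> [ffun j => phi (f j)] \in R.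

Definition prod_eq_P (A B : {set {ffun 'I_t -> gT}}) : Prop :=
  {in dpow, forall f, exists2 a, a \in A & exists2 b, b \in B & f = pw_mul a b}.
End DirectPower.

Definition zexp (gT : finGroupType) (x : gT) (z : int) : gT :=
  match z with
  | Posz m => (x ^+ m)%g
  | Negz m => ((x ^+ m.+1)^-1)%g
  end.

(* Main.v *)
Require Import Defs.
From mathcomp Require Import all_boot all_order all_algebra all_fingroup all_solvable.
From mathcomp Require Import all_field all_character.
From Stdlib Require Import Classical ClassicalEpsilon.

Module Part1.
Set Implicit Arguments. Unset Strict Implicit. Unset Printing Implicit Defensive.
Import GRing.Theory.
Local Open Scope ring_scope.

Section Poly.
Variable p : nat.
Hypothesis p_pr : prime p.
Local Notation F := 'F_p.
Variable n : nat.
Local Notation pt := {ffun 'I_n -> F}.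

Definition mono (e : {ffun 'I_n -> nat}) (x : pt) : F := \prod_i x i ^+ e i.
Definition tdeg (e : {ffun 'I_n -> nat}) := (\sum_i e i)%N.
Definition Deg D (f : pt -> F) :=
  exists s : seq (F * {ffun 'I_n -> nat}),
    all (fun a => tdeg a.2 <= D)%N s /\ forall x, f x = \sum_(a <- s) a.1 * mono a.2 x.

Lemma Deg_le D D' f : (D <= D')%N -> Deg D f -> Deg D' f.
Proof.
move=> le [s [Hs Hf]]; exists s; split=> //.
by apply/allP=> a /(allP Hs) /leq_trans; apply.
Qed.

Lemma Deg_ext D f g : f =1 g -> Deg D f -> Deg D g.
Proof. by move=> fg [s [Hs Hf]]; exists s; split=> // x; rewrite -fg. Qed.

Lemma Deg_const c : Deg 0 (fun _ => c).
Proof.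
exists [:: (c, [ffun=> 0%N])]; split.
  by rewrite /= andbT /tdeg big1 // => i _; rewrite ffunE.
by move=> x; rewrite big_seq1 /mono big1 ?mulr1 // => i _; rewrite ffunE expr0.
Qed.

Lemma Deg_coord i : Deg 1 (fun x => x i).
Proof.
exists [:: (1, [ffun j => (j == i) : nat])]; split.
  rewrite /= andbT /tdeg (bigD1 i) //= big1 ?ffunE ?eqxx // => j /negbTE ji.
  by rewrite ffunE ji.
move=> x; rewrite big_seq1 /mono mul1r (bigD1 i) //= ffunE eqxx expr1 big1 ?mulr1 //.
by move=> j /negbTE ji; rewrite ffunE ji expr0.
Qed.

Lemma Deg_add D f g : Deg D f -> Deg D g -> Deg D (fun x => f x + g x).
Proof.
move=> [s [Hs Hf]] [s' [Hs' Hg]]; exists (s ++ s'); split.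
  by rewrite all_cat Hs Hs'.
by move=> x; rewrite big_cat Hf Hg.
Qed.

Lemma Deg_scale D c f : Deg D f -> Deg D (fun x => c * f x).
Proof.
move=> [s [Hs Hf]]; exists [seq (c * a.1, a.2) | a <- s]; split.
  by rewrite all_map; apply: sub_all Hs => a.
by move=> x; rewrite Hf big_map mulr_sumr; apply: eq_bigr => a _; rewrite mulrA.
Qed.

Lemma mono_add (e1 e2 : {ffun 'I_n -> nat}) x :
  mono [ffun i => (e1 i + e2 i)%N] x = mono e1 x * mono e2 x.
Proof.
by rewrite /mono -big_split; apply: eq_bigr => i _; rewrite ffunE exprD.
Qed.

Lemma Deg_mul D1 D2 f g : Deg D1 f -> Deg D2 g -> Deg (D1 + D2) (fun x => f x * g x).
Proof.
move=> [s [Hs Hf]] [s' [Hs' Hg]].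
exists [seq ((a.1 * b.1 : F), [ffun i => (a.2 i + b.2 i)%N]) | a : F * {ffun 'I_n -> nat} <- s, b : F * {ffun 'I_n -> nat} <- s']; split.
  apply/allP=> ab /allpairsP [[a b] [/= as_ bs ->]] /=.
  rewrite /tdeg (eq_bigr (fun i => a.2 i + b.2 i)%N); last by move=> i _; rewrite ffunE.
  by rewrite big_split leq_add // -/(tdeg _); [apply: (allP Hs) | apply: (allP Hs')].
move=> x; rewrite Hf Hg big_allpairs_dep mulr_suml; apply: eq_bigr => a _.
rewrite mulr_sumr; apply: eq_bigr => b _ /=.
by rewrite mono_add; rewrite -!mulrA; congr (_ * _); rewrite mulrCA.
Qed.

Lemma Deg_sum (I : Type) (r : seq I) (P : pred I) D (G : I -> pt -> F) :
  (forall i, P i -> Deg D (G i)) -> Deg D (fun x => \sum_(i <- r | P i) G i x).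
Proof.
move=> HG; elim: r => [|i r IH].
  by apply: Deg_ext (Deg_le (leq0n D) (Deg_const 0)) => x; rewrite big_nil.
case Pi: (P i).
  by apply: Deg_ext (Deg_add (HG i Pi) IH) => x; rewrite big_cons Pi.
by apply: Deg_ext IH => x; rewrite big_cons Pi.
Qed.

Lemma Deg_prod (I : Type) (r : seq I) D (G : I -> pt -> F) :
  (forall i, Deg D (G i)) -> Deg (size r * D) (fun x => \prod_(i <- r) G i x).
Proof.
move=> HG; elim: r => [|i r IH].
  by apply: Deg_ext (Deg_const 1) => x; rewrite big_nil.
by apply: Deg_ext (Deg_mul (HG i) IH) => x; rewrite big_cons.
Qed.

Lemma Deg_exp D m f : Deg D f -> Deg (m * D) (fun x => f x ^+ m).
Proof.
move=> Hf; elim: m => [|m IH].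
  by apply: Deg_ext (Deg_const 1) => x; rewrite expr0.
by rewrite mulSn; apply: Deg_ext (Deg_mul Hf IH) => x; rewrite exprS.
Qed.

Lemma sum_pow e : (e < p.-1)%N -> \sum_(y : F) y ^+ e = 0.
Proof.
have p_gt1 := prime_gt1 p_pr.
case: e => [|e] He.
  under eq_bigr do rewrite expr0.
  by rewrite sumr_const card_Fp // pchar_Fp_0.
have : ~~ all (e.+1).-unity_root (enum [pred y : F | y != 0]).
  apply/negP => H; have := max_unity_roots (ltn0Sn e) H (enum_uniq _).
  rewrite -cardE cardC1 card_Fp // => H2.
  by have := leq_ltn_trans H2 He; rewrite ltnn.
case/allPn => y; rewrite mem_enum inE => y0 /negP ye.
have : \sum_(x : F) x ^+ e.+1 = y ^+ e.+1 * \sum_(x : F) x ^+ e.+1.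
  rewrite mulr_sumr (reindex_inj (mulfI y0)) /=.
  by apply: eq_bigr => x _; rewrite exprMn.
move/eqP; rewrite -subr_eq0 -{1}[\sum_x _]mul1r -mulrBl mulf_eq0 subr_eq0.
by case/orP => [/eqP/esym/eqP|/eqP //]; rewrite -unity_rootE => /ye.
Qed.

Lemma sum_mono (e : {ffun 'I_n -> nat}) : (exists i, e i < p.-1)%N -> \sum_(x : pt) mono e x = 0.
Proof.
case=> i ei; rewrite /mono -(bigA_distr_bigA (fun i y => y ^+ e i)) /=.
by rewrite (bigD1 i) //= sum_pow // mul0r.
Qed.

Lemma Deg_sum0 D f : Deg D f -> (D < n * p.-1)%N -> \sum_(x : pt) f x = 0.
Proof.
move=> [s [Hs Hf]] HD; under eq_bigr do rewrite Hf.
rewrite exchange_big /= big_seq big1 // => a as_.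
rewrite -mulr_sumr sum_mono ?mulr0 //.
have := allP Hs a as_; rewrite /tdeg => Ha.
case: (boolP [exists i, a.2 i < p.-1]%N) => [/existsP //|].
rewrite negb_exists => /forallP Hall.
have : (n * p.-1 <= \sum_i a.2 i)%N.
  rewrite -{1}[n]card_ord -sum_nat_const; apply: leq_sum => i _.
  by rewrite leqNgt Hall.
by move=> /leq_trans /(_ Ha) /(leq_ltn_trans) /(_ HD); rewrite ltnn.
Qed.

Lemma fermatF (y : F) : y != 0 -> y ^+ p.-1 = 1.
Proof.
move=> y0; have := expf_card y; rewrite card_Fp // => H.
have H2 : y * y ^+ p.-1 = y * 1 by rewrite mulr1 -exprS prednK // prime_gt0.
by apply: (mulfI y0).
Qed.

Lemma CW m K (g : 'I_m -> pt -> F) :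
  (forall l, Deg K (g l)) -> (forall l, g l [ffun=> 0] = 0) ->
  (m * (K * p.-1) < n * p.-1)%N ->
  exists x : pt, x != [ffun=> 0] /\ forall l, g l x = 0.
Proof.
move=> Hg Hg0 Hm.
have p_gt1 := prime_gt1 p_pr.
pose h x := \prod_(l < m) (1 - g l x ^+ p.-1).
have Hh : Deg (m * (K * p.-1)) h.
  have := @Deg_prod _ (enum 'I_m) (K * p.-1) (fun l x => 1 - g l x ^+ p.-1).
  rewrite -cardE card_ord => H; apply: Deg_ext (H _) => [x|l]; first by rewrite /h big_enum.
  apply: Deg_add; first exact: Deg_le (leq0n _) (Deg_const _).
  by rewrite mulnC; apply: Deg_ext (Deg_scale (-1) (Deg_exp p.-1 (Hg l))) => x; rewrite mulN1r.
have hE x : h x = (if [forall l, g l x == 0] then 1 else 0).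
  case: ifP => [/forallP H | /negbT].
    by apply: big1 => l _; rewrite (eqP (H l)) expr0n /= -(subn1 p) subn_eq0 leqNgt p_gt1 subr0.
  rewrite negb_forall => /existsP [l Hl].
  by rewrite /h (bigD1 l) //= fermatF // subrr mul0r.
pose S := [set x : pt | [forall l, g l x == 0]].
have HS : (p %| #|S|)%N.
  rewrite (dvdn_pcharf (pchar_Fp p_pr)) -sumr_const.
  have := Deg_sum0 Hh Hm; rewrite (eq_bigr _ (fun x _ => hE x)) -big_mkcond /=.
  by move=> H0; apply/eqP; apply: etrans H0; apply: eq_bigl => x; rewrite inE.
have S0 : [ffun=> 0] \in S by rewrite inE; apply/forallP => l; rewrite Hg0.
have : ~~ (S \subset [set [ffun=> 0]]).
  apply/negP => /subset_leq_card; rewrite cards1 => H1.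
  have : (0 < #|S|)%N by apply/card_gt0P; exists [ffun=> 0].
  move=> S_gt0; have := dvdn_leq S_gt0 HS => Hp.
  by have := leq_trans p_gt1 (leq_trans Hp H1).
case/subsetPn => x; rewrite !inE => /forallP Hx Hx0.
by exists x; split=> // l; apply/eqP.
Qed.

Definition Laff (a b : pt) (x : pt) : F :=
  if [pick l | a l != b l] is Some l then (x l - b l) / (a l - b l) else 0.

Lemma Laff_Deg a b : Deg 1 (Laff a b).
Proof.
rewrite /Laff; case: pickP => [l Hl|H].
  apply: Deg_ext (Deg_add (Deg_scale (a l - b l)^-1 (Deg_coord l))
                   (Deg_le (leq0n 1) (Deg_const (- b l / (a l - b l))))) => x.
  by rewrite mulrBl [_^-1 * _]mulrC mulNr.
exact: Deg_le (leq0n 1) (Deg_const 0).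
Qed.

Lemma Laff_val a b : a != b -> Laff a b a = 1 /\ Laff a b b = 0.
Proof.
move=> ab; rewrite /Laff; case: pickP => [l Hl|H].
  by rewrite subrr mul0r divff // subr_eq0.
by case/eqP: ab; apply/ffunP => l; move: (H l) => /= /negbFE /eqP.
Qed.

Definition Aset := [set x : pt | x != [ffun=> 0]].
Local Notation t := #|Aset|.
Definition ptj (j : 'I_t) : pt := enum_val j.

Lemma ptj_neq0 j : ptj j != [ffun=> 0].
Proof. by have := enum_valP j; rewrite inE. Qed.

Lemma ptj_inj : injective ptj.
Proof. exact: enum_val_inj. Qed.

Lemma ptj_surj x : x != [ffun=> 0] -> exists j, ptj j = x.
Proof.
move=> x0; have xA : x \in Aset by rewrite inE.
by exists (enum_rank_in xA x); rewrite /ptj enum_rankK_in.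
Qed.

Lemma card_Aset : (n <= t)%N.
Proof.
pose e (l : 'I_n) : pt := [ffun i => (i == l)%:R].
have e_inj : injective e.
  move=> l l' /ffunP /(_ l); rewrite !ffunE eqxx.
  case: (eqVneq l l') => // _ /eqP; rewrite eq_sym oner_eq0 //.
apply: (@leq_trans #|[set e l | l : 'I_n]|); first by rewrite card_imset // card_ord.
apply: subset_leq_card; apply/subsetP => x /imsetP [l _ ->].
rewrite inE; apply/eqP => /ffunP /(_ l); rewrite !ffunE eqxx => /eqP.
by rewrite oner_eq0.
Qed.

Definition inW K (w : 'I_t -> F) :=
  exists g, Deg K g /\ g [ffun=> 0] = 0 /\ forall j, w j = g (ptj j).

Lemma inW_add K w1 w2 : inW K w1 -> inW K w2 -> inW K (fun j => w1 j + w2 j).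
Proof.
move=> [g1 [D1 [Z1 E1]]] [g2 [D2 [Z2 E2]]].
exists (fun x => g1 x + g2 x); split; first exact: Deg_add.
by split=> [|j]; rewrite ?Z1 ?Z2 ?addr0 // E1 E2.
Qed.

Lemma inW_scale K c w : inW K w -> inW K (fun j => c * w j).
Proof.
move=> [g [D1 [Z1 E1]]]; exists (fun x => c * g x); split; first exact: Deg_scale.
by split=> [|j]; rewrite ?Z1 ?mulr0 // E1.
Qed.

Lemma inW_0 K : inW K (fun _ => 0).
Proof.
exists (fun _ => 0); split; first exact: Deg_le (leq0n _) (Deg_const 0).
by [].
Qed.

Lemma inW_ext K w1 w2 : w1 =1 w2 -> inW K w1 -> inW K w2.
Proof. by move=> e [g [D1 [Z1 E1]]]; exists g; split=> //; split=> // j; rewrite -e. Qed.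

Lemma inW_sum K (I : Type) (r : seq I) (P : pred I) (W : I -> 'I_t -> F) :
  (forall i, P i -> inW K (W i)) -> inW K (fun j => \sum_(i <- r | P i) W i j).
Proof.
move=> HW; elim: r => [|i r IH].
  by apply: inW_ext (inW_0 K) => j; rewrite big_nil.
case Pi: (P i).
  by apply: inW_ext (inW_add (HW i Pi) IH) => j; rewrite big_cons Pi.
by apply: inW_ext IH => j; rewrite big_cons Pi.
Qed.

Lemma interpJ (J : {set 'I_t}) i : i \in J ->
  exists w, inW #|J|.+1 w /\ forall j, j \in J -> w j = (i == j)%:R.
Proof.
move=> iJ.
pose G j x := if j == i then 1 else Laff (ptj i) (ptj j) x.
pose g x := Laff (ptj i) [ffun=> 0] x * \prod_(j in J) G j x.
exists (fun j => g (ptj j)); split.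
  exists g; split.
    rewrite -add1n; apply: Deg_mul; first exact: Laff_Deg.
    have := @Deg_prod _ (enum J) 1 G; rewrite -cardE muln1 => H.
    apply: Deg_ext (H _) => [x|j]; first by rewrite big_enum.
    rewrite /G; case: (j == i); last exact: Laff_Deg.
    exact: Deg_le (leq0n 1) (Deg_const 1).
  split=> //; rewrite /g.
  by have [_ ->] := Laff_val (ptj_neq0 i); rewrite mul0r.
move=> j jJ; rewrite /g; case: eqP => [<-|/eqP ij].
  have [-> _] := Laff_val (ptj_neq0 i); rewrite mul1r.
  apply: big1 => l _; rewrite /G; case: eqP => // /eqP li.
  have : ptj i != ptj l by apply: contra li => /eqP /ptj_inj ->.
  by case/Laff_val.
rewrite (bigD1 j) //= /G eq_sym (negbTE ij).
have : ptj i != ptj j by apply: contra ij => /eqP /ptj_inj ->.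
by case/Laff_val => _ ->; rewrite mul0r mulr0.
Qed.

Definition interp K (S : {set 'I_t}) :=
  exists wf : 'I_t -> 'I_t -> F, (forall i, i \in S -> inW K (wf i)) /\
    (forall i j, i \in S -> j \in S -> wf i j = (i == j)%:R).

Definition basisP K (S : {set 'I_t}) :=
  forall w, inW K w -> (forall j, j \in S -> w j = 0) -> forall j, w j = 0.

Lemma extend_step K S : interp K S ->
  basisP K S \/ exists b, b \notin S /\ interp K (b |: S).
Proof.
move=> [wf [Hw Hv]].
case: (classic (basisP K S)) => [|nB]; [by left | right].
have [w [Hw0 [Hv0 Hn]]] : exists w, inW K w /\ (forall j, j \in S -> w j = 0) /\
                                   ~ (forall j, w j = 0).
  apply: NNPP => H; apply: nB => w Hw1 Hv1; apply: NNPP => Hn1; apply: H.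
  by exists w.
have [b wb] : exists b, w b != 0.
  apply: NNPP => H; apply: Hn => j; apply/eqP; apply: NNPP => Hj; apply: H.
  by exists j; apply/negP.
have bS : b \notin S by apply: contra wb => /Hv0 ->.
exists b; split=> //.
pose vb j := (w b)^-1 * w j.
exists (fun i => if i == b then vb else (fun j => wf i j - wf i b * vb j)); split.
  move=> i; rewrite in_setU1; case: eqP => [_ _|_ /= iS].
    exact: inW_scale.
  apply: inW_ext (inW_add (Hw i iS) (inW_scale (- wf i b) (inW_scale (w b)^-1 Hw0))) => j.
  by rewrite mulNr.
have vbS j : j \in S -> vb j = 0 by move=> jS; rewrite /vb (Hv0 j jS) mulr0.
have vbb : vb b = 1 by rewrite /vb mulVf.
move=> i j; rewrite !in_setU1.
case: (eqVneq i b) => [->|ib] /=; case: (eqVneq j b) => [->|jb] //= iS jS.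
all: first [ by rewrite vbb eqxx | by rewrite vbS // eq_sym (negbTE jb)
  | by rewrite vbb mulr1 subrr eq_sym (negbTE ib) | by rewrite vbS // mulr0 subr0 Hv
  | by rewrite vbb mulr1 subrr (negbTE ib) ].
Qed.

Lemma extend K S : interp K S ->
  exists S' : {set 'I_t}, S \subset S' /\ interp K S' /\ basisP K S'.
Proof.
move Hm : (t - #|S|)%N => m; elim: m S Hm => [|m IH] S Hm HS.
  case: (extend_step HS) => [B|[b [bS _]]]; first by exists S.
  have := max_card (b |: S); rewrite cardsU1 bS add1n => H.
  by rewrite card_ord in H; move/eqP: Hm; rewrite subn_eq0 leqNgt H.
case: (extend_step HS) => [B|[b [bS HS1]]]; first by exists S.
have [|S' [sub [I B]]] := IH (b |: S) _ HS1.
  by rewrite cardsU1 bS add1n subnS Hm.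
by exists S'; split=> //; apply: subset_trans sub; apply: subsetUr.
Qed.

Lemma basis_repr K (S : {set 'I_t}) wf : (forall i, i \in S -> inW K (wf i)) ->
  (forall i j, i \in S -> j \in S -> wf i j = (i == j)%:R) -> basisP K S ->
  forall w, inW K w -> forall j, w j = \sum_(i in S) w i * wf i j.
Proof.
move=> Hw Hv B w Hw0.
have H := B (fun j => w j - \sum_(i in S) w i * wf i j).
move=> j; apply/eqP; rewrite -subr_eq0; apply/eqP; apply: H => [|l lS].
  have Hs : inW K (fun l => \sum_(i in S) w i * wf i l).
    by apply: inW_sum => i iS; apply: inW_scale; apply: Hw.
  by apply: inW_ext (inW_add Hw0 (inW_scale (-1) Hs)) => l; rewrite mulN1r.
rewrite (bigD1 l) //= Hv // eqxx mulr1 big1 ?addr0 ?subrr // => i /andP [iS il].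
by rewrite Hv // (negbTE il) mulr0.
Qed.
End Poly.

End Part1.
Import Part1.

Module Part2.
Set Implicit Arguments. Unset Strict Implicit. Unset Printing Implicit Defensive.
Import GRing.Theory.

Definition asb (P : Prop) : bool := if excluded_middle_informative P then true else false.
Lemma asbP P : reflect P (asb P).
Proof. by rewrite /asb; case: excluded_middle_informative => H; constructor. Qed.

Lemma fchoice (A B : Type) (P : A -> B -> Prop) :
  (forall a, exists b, P a b) -> exists f : A -> B, forall a, P a (f a).
Proof.
move=> H; exists (fun a => proj1_sig (constructive_indefinite_description _ (H a))).
by move=> a; case: (constructive_indefinite_description _ (H a)).
Qed.

Section Grp.
Variables (gT : finGroupType) (C : {group gT}) (p : nat).
Hypotheses (p_pr : prime p) (abelC : (p.-abelem C)%g) (ntC : C != 1%g :> {set gT}).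
Local Notation d := (abelem_dim' (gval C)).+1.
Local Notation rV := (abelem_rV abelC ntC).
Local Notation rVE := (rVabelem abelC ntC).
Local Open Scope group_scope.

Lemma xp1 x : x \in C -> x ^+ p = 1.
Proof. by case/(abelemP p_pr): abelC => _; apply. Qed.

Lemma rV_inj x y : x \in C -> y \in C -> rV x = rV y -> x = y.
Proof. by move=> xC yC; apply: (abelem_rV_inj xC yC). Qed.

Lemma rV_eq1 x : x \in C -> rV x = 0%R -> x = 1.
Proof. by move=> xC H; apply: rV_inj => //; rewrite H abelem_rV_1. Qed.

Lemma rV_M x y : x \in C -> y \in C -> rV (x * y) = (rV x + rV y)%R.
Proof. by move=> xC yC; rewrite abelem_rV_M. Qed.

Lemma rV_X x (a : 'F_p) : x \in C -> rV (x ^+ a) = (a *: rV x)%R.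
Proof. by move=> xC; rewrite abelem_rV_X // natr_Zp. Qed.

Lemma rV_prod (I : Type) (r : seq I) (P : pred I) (G : I -> gT) :
  (forall i, P i -> G i \in C) ->
  \prod_(i <- r | P i) G i \in C /\ rV (\prod_(i <- r | P i) G i) = (\sum_(i <- r | P i) rV (G i))%R.
Proof.
move=> HG; apply: (big_ind2 (fun x v => x \in C /\ rV x = v)).
- by rewrite group1 abelem_rV_1.
- by move=> x1 x2 y1 y2 [x1C <-] [y1C <-]; rewrite groupM // rV_M.
- by move=> i Pi; rewrite HG.
Qed.

Lemma cexpF c (b : nat) : c \in C -> c ^+ (((b%:R)%R : 'F_p) : nat) = c ^+ b.
Proof. by move=> cC; rewrite val_Fp_nat // expg_mod // xp1. Qed.

Variable k : nat.
Local Notation K := k.+1.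
Local Notation n := (d.+1 * K)%N.
Local Notation t := #|Aset p n|.

Definition Rset : {set {ffun 'I_t -> gT}} :=
  [set f | asb (f \in dpow C t /\ forall c : 'I_d, inW K (fun j => rV (f j) ord0 c))].

Lemma dpowP t' (f : {ffun 'I_t' -> gT}) : reflect (forall j, f j \in C) (f \in dpow C t').
Proof. by rewrite /dpow inE; apply: forallP. Qed.

Lemma RsetP f : reflect (f \in dpow C t /\ forall c : 'I_d, inW K (fun j => rV (f j) ord0 c)) (f \in Rset).
Proof. rewrite /Rset inE. exact: asbP. Qed.

Lemma one_in_R : pw_one gT t \in Rset.
Proof.
apply/RsetP; split; first by apply/dpowP => j; rewrite ffunE group1.
by move=> c; apply: inW_ext (inW_0 _ _ _) => j; rewrite ffunE abelem_rV_1 mxE.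
Qed.

Lemma R_subgroup : is_subgroup_dpow C Rset.
Proof.
split.
- by apply/subsetP => f /RsetP [].
- exact: one_in_R.
- move=> f g /RsetP [/dpowP fC Hf] /RsetP [/dpowP gC Hg]; apply/RsetP; split.
    by apply/dpowP => j; rewrite ffunE groupM.
  move=> c; apply: inW_ext (inW_add (Hf c) (Hg c)) => j.
  by rewrite ffunE rV_M // mxE.
- move=> f /RsetP [/dpowP fC Hf]; apply/RsetP; split.
    by apply/dpowP => j; rewrite ffunE groupV.
  move=> c; apply: inW_ext (inW_scale (-1) (Hf c)) => j.
  by rewrite ffunE abelem_rV_V // mxE mulN1r.
Qed.

Lemma R_End : End_invariant C Rset.
Proof.
move=> phi phiM phiC f /RsetP [/dpowP fC Hf].
pose psi v := rV (phi (rVE v)).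
have psiD u v : psi (u + v)%R = (psi u + psi v)%R.
  by rewrite /psi rVabelemD phiM ?mem_rVabelem // rV_M // phiC ?mem_rVabelem.
have psi0 : psi 0%R = 0%R.
  have H := psiD 0%R 0%R; rewrite addr0 in H.
  by apply: (@addrI _ (psi 0%R)); rewrite addr0 -H.
have psiMn v m : psi (v *+ m)%R = (psi v *+ m)%R.
  by elim: m => [|m IH]; rewrite ?mulr0n // !mulrS psiD IH.
have psiZ (a : 'F_p) v : psi (a *: v)%R = (a *: psi v)%R.
  by rewrite -[a]natr_Zp !scaler_nat psiMn.
have psiE v : psi v = (\sum_(c < d) v ord0 c *: psi (delta_mx ord0 c))%R.
  rewrite {1}[v]row_sum_delta (big_morph psi psiD psi0).
  by apply: eq_bigr => c _; rewrite psiZ.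
apply/RsetP; split.
  by apply/dpowP => j; rewrite ffunE phiC.
move=> c'.
have H : inW K (fun j => \sum_(c < d) (psi (delta_mx ord0 c) ord0 c') * rV (f j) ord0 c)%R.
  by apply: inW_sum => c _; apply: inW_scale.
apply: inW_ext H => j; rewrite ffunE.
have -> : rV (phi (f j)) = psi (rV (f j)) by rewrite /psi abelem_rV_K.
rewrite psiE summxE; apply: eq_bigr => c _.
by rewrite mxE mulrC.
Qed.


Lemma R_kernel f : f \in Rset -> exists j : 'I_t, f \in Kproj C j.
Proof.
move=> /RsetP [/dpowP fC Hf].
have [g Hg] := @fchoice _ _ (fun c g => Deg K g /\ g [ffun=> 0%R] = 0%R /\
                          forall j, rV (f j) ord0 c = g (ptj j)) Hf.
have [|x [x0 Hx]] := CW p_pr (fun c => proj1 (Hg c)) (fun c => proj1 (proj2 (Hg c))).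
  rewrite mulnA ltn_pmul2r; last by rewrite -subn1 subn_gt0 prime_gt1.
  by rewrite ltn_pmul2r.
have [j ej] := ptj_surj x0.
exists j; rewrite /Kproj inE; apply/andP; split; first by apply/dpowP.
apply/eqP; apply: rV_eq1 => //; apply/rowP => c.
by rewrite !mxE (proj2 (proj2 (Hg c))) ej Hx.
Qed.

Lemma R_bprime (J : {set 'I_t}) : #|J| = k ->
  exists J' : {set 'I_t},
    [/\ J \subset J',
        Rset :&: prod_out C J' = [set pw_one gT t],
        prod_eq_P C Rset (prod_out C J')
      & exists nn : 'I_t -> 'I_t -> int,
          forall (i : 'I_t) (c : gT), c \in C ->
            pw_mul (delta i c)
                 (pw_inv [ffun j => if j \in J' then 1%g else zexp c (nn i j)])
              \in Rset].
Proof.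
move=> cardJ.
have Hex : forall i, exists w : 'I_t -> 'F_p, i \in J -> inW K w /\ forall j, j \in J -> w j = ((i == j)%:R)%R.
  move=> i; case: (boolP (i \in J)) => iJ; last by exists (fun _ => 0%R).
  by have [w [Hw Hv]] := interpJ iJ; exists w => _; split=> //; move: Hw; rewrite cardJ.
have [wf0 Hwf0] := fchoice Hex.
have [|S' [JS' [[wf [Hw Hv]] B]]] := @extend p _ K J.
  by exists wf0; split=> [i /Hwf0 []|i j /Hwf0 [] _ H /H].
pose T (h : 'I_t -> gT) : {ffun 'I_t -> gT} := [ffun j => \prod_(i in S') h i ^+ wf i j].
have rVT h j c : (forall i, i \in S' -> h i \in C) ->
    T h j \in C /\ rV (T h j) ord0 c = (\sum_(i in S') wf i j * rV (h i) ord0 c)%R.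
  move=> hC; have [PC PE] := @rV_prod _ (index_enum _) (fun i => i \in S') (fun i => h i ^+ wf i j)
                              (fun i iS => groupX _ (hC i iS)).
  rewrite ffunE; split=> //; rewrite PE summxE; apply: eq_bigr => i iS.
  by rewrite rV_X ?hC // mxE.
have TR h : (forall i, i \in S' -> h i \in C) -> T h \in Rset.
  move=> hC; apply/RsetP; split; first by apply/dpowP => j; case: (rVT h j ord0 hC).
  move=> c; apply: inW_ext (_ : inW K (fun j => \sum_(i in S') rV (h i) ord0 c * wf i j)%R) => [j|].
    by rewrite (proj2 (rVT h j c hC)); apply: eq_bigr => i _; rewrite mulrC.
  by apply: inW_sum => i iS; apply: inW_scale; apply: Hw.
have TS h j : (forall i, i \in S' -> h i \in C) -> j \in S' -> T h j = h j.
  move=> hC jS; apply: rV_inj; [by case: (rVT h j ord0 hC) | by apply: hC |].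
  apply/rowP => c; rewrite (proj2 (rVT h j c hC)) (bigD1 j) //= Hv // eqxx mul1r.
  rewrite big1 ?addr0 // => i /andP [iS ij].
  by rewrite Hv // (negbTE ij) mul0r.
exists S'; split=> //.
- apply/setP => f; rewrite in_setI in_set1; apply/andP/eqP => [[fR]|->].
    rewrite /prod_out inE => /andP [_ /forallP f1].
    case/RsetP: fR => /dpowP fC Hf.
    apply/ffunP => j; rewrite ffunE; apply: rV_eq1 => //; apply/rowP => c.
    rewrite mxE; apply: (B _ (Hf c)) => l lS.
    by move: (f1 l); rewrite lS => /eqP ->; rewrite abelem_rV_1 mxE.
  split; first exact: one_in_R.
  rewrite /prod_out inE; apply/andP; split; first by apply/dpowP => j; rewrite ffunE group1.
  by apply/forallP => j; apply/implyP => _; rewrite ffunE.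
- move=> f /dpowP fC.
  have hC : forall i, i \in S' -> f i \in C by move=> i _.
  exists (T f); first exact: TR.
  exists [ffun j => (T f j)^-1 * f j].
    rewrite /prod_out inE; apply/andP; split.
      apply/dpowP => j; rewrite ffunE groupM ?groupV //.
      by case: (rVT f j ord0 hC).
    by apply/forallP => j; apply/implyP => jS; rewrite ffunE TS // mulVg.
  by apply/ffunP => j; rewrite !ffunE mulKVg.
- exists (fun i j => if i \in S' then Negz ((wf i j : nat) + p.-1) else Posz (i == j)).
  move=> i c cC; case: (boolP (i \in S')) => iS.
    rewrite (_ : pw_mul _ _ = T (fun l => if l == i then c else 1)).
      by apply: TR => l _; case: (l == i); rewrite ?group1.
    have hC : forall l, l \in S' -> (if l == i then c else 1) \in C.
      by move=> l _; case: (l == i); rewrite ?group1.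
    apply/ffunP => j.
    have -> : T (fun l => if l == i then c else 1) j = c ^+ wf i j.
      apply: rV_inj; [by case: (rVT _ j ord0 hC) | by rewrite groupX |].
      apply/rowP => c'; rewrite (proj2 (rVT _ j c' hC)) rV_X // mxE.
      rewrite (bigD1 i) //= eqxx big1 ?addr0; first by rewrite mulrC.
      by move=> l /andP [_ /negbTE ->]; rewrite abelem_rV_1 mxE mulr0.
    rewrite !ffunE.
    case: (boolP (j \in S')) => jS.
      rewrite invg1 mulg1 Hv //; case: (eqVneq j i) => [eji|ji].
        by rewrite cexpF // expg1.
      by rewrite cexpF // expg0.
    have ji : j != i by apply/eqP => eji; move: jS; rewrite eji iS.
    rewrite (negbTE ji) mul1g /= invgK -addnS prednK ?prime_gt0 //.
    by rewrite expgD xp1 // mulg1.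
  rewrite (_ : pw_mul _ _ = pw_one gT t); first exact: one_in_R.
  apply/ffunP => j; rewrite !ffunE; case: (eqVneq j i) => [eji|ji].
    by subst j; rewrite (negbTE iS) /= expg1 mulgV.
  by rewrite mul1g; case: (j \in S') => /=; rewrite ?expg0 invg1.
Qed.
End Grp.

End Part2.
Import Part2.

Unset Implicit Arguments.

Lemma trivial_case (gT : finGroupType) (C : {group gT}) (k : nat) :
  (C :==: 1)%g -> 0 < k ->
  exists t : nat, k <= t /\
  exists R : {set {ffun 'I_t -> gT}},
    [/\ is_subgroup_dpow C R,
        End_invariant C R,
        (forall r, r \in R -> exists j : 'I_t, r \in Kproj C j),
        (forall J : {set 'I_t}, #|J| = k -> prod_eq_P C R (prod_out C J))
      & (forall J : {set 'I_t}, #|J| = k ->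
          exists J' : {set 'I_t},
            [/\ J \subset J',
                R :&: prod_out C J' = [set pw_one gT t],
                prod_eq_P C R (prod_out C J')
              & exists n : 'I_t -> 'I_t -> int,
                  forall (i : 'I_t) (c : gT), c \in C ->
                    pw_mul (delta i c)
                         (pw_inv [ffun j => if j \in J' then 1%g else zexp c (n i j)])
                      \in R])].
Proof.
move=> /eqP C1 k0.
have C1P x : x \in C -> x = 1%g by rewrite C1 inE => /eqP.
have one_dpow : pw_one gT k \in dpow C k by rewrite inE; apply/forallP => j; rewrite ffunE group1.
have dpow1 f : f \in dpow C k -> f = pw_one gT k.
  by rewrite inE => /forallP H; apply/ffunP => j; rewrite ffunE; apply: C1P.
have one_out J : pw_one gT k \in prod_out C J.
  by rewrite inE one_dpow; apply/forallP => j; apply/implyP => _; rewrite ffunE.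
have peq J : prod_eq_P C [set pw_one gT k] (prod_out C J).
  move=> f /dpow1 ->; exists (pw_one gT k); first by rewrite inE.
  exists (pw_one gT k); first exact: one_out.
  by apply/ffunP => j; rewrite !ffunE mulg1.
exists k; split=> //; exists [set pw_one gT k]; split.
- split.
  + by apply/subsetP => f; rewrite inE => /eqP ->.
  + by rewrite inE.
  + move=> f g; rewrite !inE => /eqP -> /eqP ->; apply/eqP/ffunP => j.
    by rewrite !ffunE mulg1.
  + move=> f; rewrite !inE => /eqP ->; apply/eqP/ffunP => j.
    by rewrite !ffunE invg1.
- move=> phi _ phiC f; rewrite !inE => /eqP ->; apply/eqP/ffunP => j.
  by rewrite !ffunE; apply: C1P; apply: phiC.
- move=> r; rewrite inE => /eqP ->; exists (Ordinal k0).
  by rewrite inE one_dpow ffunE eqxx.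
- by move=> J _; apply: peq.
- move=> J _; exists J; split=> //.
  + apply/setP => f; rewrite in_setI !inE; apply/andP/idP => [[] //|/eqP ->].
    by split=> //; apply/andP; split; apply/forallP => j; rewrite ?ffunE ?group1 ?eqxx ?implybT.
  + exists (fun _ _ => 0%Z) => i c /C1P ->; rewrite inE; apply/eqP/ffunP => j.
    by rewrite !ffunE; case: (j == i); case: (j \in J); rewrite /= ?invg1 ?mulg1.
Qed.

Theorem mainTheorem9 (gT : finGroupType) (C : {group gT}) (p : nat) (k : nat) :
  prime p -> (p.-abelem C)%g -> 0 < k ->
  exists t : nat, k <= t /\
  exists R : {set {ffun 'I_t -> gT}},
    [/\ is_subgroup_dpow C R,
        End_invariant C R,
        (* a) *)
        (forall r, r \in R -> exists j : 'I_t, r \in Kproj C j),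
        (* b) *)
        (forall J : {set 'I_t}, #|J| = k -> prod_eq_P C R (prod_out C J))
      & (* b') *)
        (forall J : {set 'I_t}, #|J| = k ->
          exists J' : {set 'I_t},
            [/\ J \subset J',
                R :&: prod_out C J' = [set pw_one gT t],
                prod_eq_P C R (prod_out C J')
              & exists n : 'I_t -> 'I_t -> int,
                  forall (i : 'I_t) (c : gT), c \in C ->
                    pw_mul (delta i c)
                         (pw_inv [ffun j => if j \in J' then 1%g else zexp c (n i j)])
                      \in R])].
Proof.
move=> p_pr abelC k0.
case: (boolP (C :==: 1)%g) => [C1|ntC]; first exact: trivial_case.
exists #|Aset p ((abelem_dim' (gval C)).+2 * k.+1)|; split.
  apply: leq_trans (card_Aset _ _); apply: leq_trans (leqnSn k) _.
  by rewrite leq_pmull.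
exists (Rset abelC ntC k); split.
- exact: R_subgroup.
- exact: R_End.
- exact: R_kernel.
- move=> J cardJ; have [J' [JS _ peq _]] := R_bprime p_pr abelC ntC cardJ.
  move=> f /peq [a aR [b bO ->]]; exists a => //; exists b => //.
  move: bO; rewrite !inE => /andP [-> /forallP bJ]; apply/forallP => j.
  apply/implyP => jJ; have := bJ j; rewrite (subsetP JS) //.
- move=> J cardJ; exact: R_bprime.
Qed.
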